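(* Let $n$ be even, $V=V_1\sqcup V_2$ with $|V_1|=|V_2|=n/2$, and $0\le q<p\le 1$. Consider the complete weighted graph on $V$ with $w(u,v)=p$ for distinct $u,v$ in the same block, $w(u,v)=q$ for $u,v$ in different blocks, and $w(v,v)=0$. Let $\mathcal P$ be the set of all cuts $\{A,A^\complement\}$ with $A\subseteq V$, with cost $c(\{A,A^\complement\})=\sum_{u\in A,v\in A^\complement}w(u,v)$, and for $\Psi\in\mathbb R$ let $\mathcal P_\Psi=\{P\in\mathcal P: c(P)\le\Psi\}$. Let $a\in\mathbb N$ be the agreement parameter, and assume $a\ge 2$ and $p>3qn/(n-2a)$. Let $\xi=1+q/p$. If $$q\Bigl(\frac n2\Bigr)^2\le\Psi<\frac{n^2}{4}\,p\Bigl(\frac13\xi\Bigl(\xi-\frac{2a}{n}\Bigr)-\frac19\Bigl(\xi-\frac{2a}{n}\Bigr)^2\Bigr),$$ then the two orientations of $\mathcal P_\Psi$ induced by the blocks $V_1$ and $V_2$ are distinct, and they are exactly the $\mathcal P_\Psi$-tangles.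
   Context: An orientation of a set of cuts chooses one side of every cut in it. An orientation $O$ of $\mathcal P_\Psi$ is a $\mathcal P_\Psi$-tangle if for all (not necessarily distinct) chosen sides $A,B,C\in O$ we have $|A\cap B\cap C|\ge a$. The orientation induced by block $V_i$ picks from every cut $\{A,A^\complement\}$ the side containing the majority of the vertices of $V_i$. *)

(* Defs.v *)
From HB Require Import structures.
From mathcomp Require Import all_boot all_order all_algebra.
Set Implicit Arguments. Unset Strict Implicit. Unset Printing Implicit Defensive.
Import Order.TTheory GRing.Theory Num.Theory.
Local Open Scope ring_scope.

Section Defs.
Variables (R : realFieldType) (T : finType) (V1 : {set T}) (p q : R).

Definition wgt (u v : T) : R :=
  if u == v then 0 else if (u \in V1) == (v \in V1) then p else q.

Definition cut_cost (A : {set T}) : R :=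
  \sum_(u in A) \sum_(v in ~: A) wgt u v.

Variable Psi : R.

(* an orientation of P_Psi, represented as the set of chosen sides:
   only sides of cuts in P_Psi are chosen, and of every cut {A, ~:A}
   in P_Psi exactly one side is chosen *)
Definition is_orientation (O : {set {set T}}) : Prop :=
  (forall A, A \in O -> cut_cost A <= Psi) /\
  (forall A, cut_cost A <= Psi -> (A \in O) != (~: A \in O)).

Definition is_tangle (a : nat) (O : {set {set T}}) : Prop :=
  is_orientation O /\
  (forall A B C, A \in O -> B \in O -> C \in O -> (a <= #|A :&: B :&: C|)%N).

Definition induced (Vi : {set T}) : {set {set T}} :=
  [set A : {set T} | (cut_cost A <= Psi) && (#|Vi| < 2 * #|A :&: Vi|)%N].

End Defs.

(* Main.v *)
Require Import Defs.
From HB Require Import structures.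
From mathcomp Require Import all_boot all_order all_algebra.
From mathcomp Require Import zify ring lra.
Import Order.TTheory GRing.Theory Num.Theory.
Local Open Scope ring_scope.
Set Implicit Arguments. Unset Strict Implicit. Unset Printing Implicit Defensive.

Section Cost.
Variables (R : realFieldType) (T : finType) (V1 W : {set T}) (p q : R).
Hypothesis hW : forall u v : T, ((u \in V1) == (v \in V1)) = ((u \in W) == (v \in W)).

Definition kcnt (A : {set T}) : R := #|A :&: W|%:R.
Definition lcnt (A : {set T}) : R := #|A :\: W|%:R.

Lemma inner_sum (A : {set T}) u : u \in A ->
  \sum_(v in ~: A) wgt V1 p q u v =
  if u \in W then p * kcnt (~: A) + q * lcnt (~: A) else q * kcnt (~: A) + p * lcnt (~: A).
Proof.
move=> uA; rewrite (big_setID W) /=.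
have E1 : \sum_(v in ~: A :&: W) wgt V1 p q u v = \sum_(v in ~: A :&: W) (if u \in W then p else q).
  apply: eq_bigr => v; rewrite !inE => /andP [vA vW].
  rewrite /wgt; have -> : (u == v) = false.
    by apply/negbTE; apply: contraNneq vA => <-.
  by rewrite hW vW; case: (u \in W).
have E2 : \sum_(v in ~: A :\: W) wgt V1 p q u v = \sum_(v in ~: A :\: W) (if u \in W then q else p).
  apply: eq_bigr => v; rewrite !inE => /andP [vW vA].
  rewrite /wgt; have -> : (u == v) = false.
    by apply/negbTE; apply: contraNneq vA => <-.
  by rewrite hW (negbTE vW); case: (u \in W).
rewrite E1 E2 !sumr_const /kcnt /lcnt.
by case: (u \in W); rewrite !mulr_natr.
Qed.

Lemma cost_formula (A : {set T}) :
  cut_cost V1 p q A = p * (kcnt A * kcnt (~: A) + lcnt A * lcnt (~: A))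
                      + q * (kcnt A * lcnt (~: A) + lcnt A * kcnt (~: A)).
Proof.
rewrite /cut_cost (big_setID W) /=.
rewrite (eq_bigr (fun _ => p * kcnt (~: A) + q * lcnt (~: A))); last first.
  by move=> u; rewrite !inE => /andP [uA uW]; rewrite inner_sum // uW.
rewrite [X in _ + X](eq_bigr (fun _ => q * kcnt (~: A) + p * lcnt (~: A))); last first.
  by move=> u; rewrite !inE => /andP [uW uA]; rewrite inner_sum // (negbTE uW).
rewrite !sumr_const !mulr_natr -/(kcnt A) -/(lcnt A).
ring.
Qed.

Lemma kk_sum (A : {set T}) : kcnt A + kcnt (~: A) = #|W|%:R.
Proof. by rewrite /kcnt -natrD (setIC A W) (setIC (~: A) W) -setDE cardsID. Qed.

Lemma ll_sum (A : {set T}) : lcnt A + lcnt (~: A) = #|~: W|%:R.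
Proof. by rewrite /lcnt -natrD !setDE (setIC A) (setIC (~: A)) -setDE cardsID. Qed.

Lemma kk_ge0 (A : {set T}) : 0 <= kcnt A. Proof. exact: ler0n. Qed.
Lemma ll_ge0 (A : {set T}) : 0 <= lcnt A. Proof. exact: ler0n. Qed.

Lemma cost_compl (A : {set T}) : cut_cost V1 p q (~: A) = cut_cost V1 p q A.
Proof. rewrite !cost_formula setCK; ring. Qed.
End Cost.


Lemma concave_min (R : realFieldType) (al be B y1 y2 l : R) :
  y1 <= l -> l <= y2 ->
  B <= - y1 ^+ 2 + al * y1 + be -> B <= - y2 ^+ 2 + al * y2 + be ->
  B <= - l ^+ 2 + al * l + be.
Proof.
move=> h1 h2 g1 g2.
have [e|ne] := eqVneq y1 y2.
  by have -> : l = y1 by subst; apply/eqP; rewrite eq_le h1 h2.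
have hp : 0 < y2 - y1 by rewrite subr_gt0 lt_neqAle ne (le_trans h1 h2).
have id : (y2 - y1) * (- l ^+ 2 + al * l + be) =
   (y2 - l) * (- y1 ^+ 2 + al * y1 + be) + (l - y1) * (- y2 ^+ 2 + al * y2 + be)
   + (y2 - y1) * ((l - y1) * (y2 - l)) by ring.
have h3 : 0 <= (y2 - y1) * ((l - y1) * (y2 - l)).
  by apply: mulr_ge0; [lra| apply: mulr_ge0; lra].
have h4 : (y2 - y1) * B <= (y2 - y1) * (- l ^+ 2 + al * l + be).
  rewrite id.
  have : (y2 - l) * B <= (y2 - l) * (- y1 ^+ 2 + al * y1 + be) by apply: ler_wpM2l; lra.
  have : (l - y1) * B <= (l - y1) * (- y2 ^+ 2 + al * y2 + be) by apply: ler_wpM2l; lra.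
  nra.
by rewrite ler_pM2l in h4.
Qed.

Lemma classify (R : realFieldType) (M r c kap l : R) :
  0 < M -> 0 <= r -> r <= 1 -> 2 * c <= M -> 0 <= kap -> 2 * kap <= M -> 0 <= l -> l <= M ->
  (M - kap) * kap + l * (M - l) + r * ((M - kap) * (M - l) + l * kap) < c * (M + r * M - c) ->
  kap + (M - l) < c \/ kap + l < c - r * M.
Proof.
move=> M0 r0 r1 cM k0 kM l0 lM hg.
case: (ltP (kap + (M - l)) c) => [h|h1]; first by left.
case: (ltP (kap + l) (c - r * M)) => [h|h2]; first by right.
exfalso.
have [al alE] : exists al : R, al = M - r * (M - kap) + r * kap by eexists.
have [be beE] : exists be : R, be = (M - kap) * kap + r * (M - kap) * M by eexists.
have gE : forall y, (M - kap) * kap + y * (M - y) + r * ((M - kap) * (M - y) + y * kap)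
   = - y ^+ 2 + al * y + be by move=> y; rewrite alE beE; ring.
have [B BE] : exists B : R, B = c * (M + r * M - c) by eexists.
rewrite gE -BE in hg.
suff : B <= - l ^+ 2 + al * l + be by lra.
have lo : exists y1, [/\ y1 <= l & B <= - y1 ^+ 2 + al * y1 + be].
  case: (leP 0 (c - r * M - kap)) => hs.
    exists (c - r * M - kap); split; first lra.
    rewrite -gE.
    have : 0 <= kap * (c - r * M - kap) * (1 + r) by apply: mulr_ge0; [apply: mulr_ge0|]; lra.
    rewrite BE; nra.
  exists 0; split => //.
  rewrite -gE.
  have : 0 <= (kap - (c - r * M)) * (M - kap - c) by apply: mulr_ge0; lra.
  rewrite BE; nra.
have hi : exists y2, [/\ l <= y2 & B <= - y2 ^+ 2 + al * y2 + be].
  case: (leP kap c) => hs.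
    exists (M + kap - c); split; first lra.
    rewrite -gE.
    have : 0 <= kap * (c - kap) * (1 - r) by apply: mulr_ge0; [apply: mulr_ge0|]; lra.
    rewrite BE; nra.
  exists M; split => //.
  rewrite -gE.
  have : 0 <= (kap - c) * (M + r * M - kap - c) by apply: mulr_ge0; nra.
  rewrite BE; nra.
case: lo => y1 [a1 b1]; case: hi => y2 [a2 b2].
exact: (@concave_min R al be B y1 y2 l a1 a2 b1 b2).
Qed.


Lemma card_U_le (T : finType) (A B : {set T}) : (#|A :|: B| <= #|A| + #|B|)%N.
Proof. by rewrite cardsU leq_subr. Qed.

Lemma card_triple (T : finType) (X A B C : {set T}) :
  (#|X| <= #|A :&: B :&: C| + #|X :\: A| + #|X :\: B| + #|X :\: C|)%N.
Proof.
have sub : X \subset (A :&: B :&: C) :|: (X :\: A) :|: (X :\: B) :|: (X :\: C).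
  apply/subsetP => x xX; rewrite !inE xX.
  by case: (x \in A); case: (x \in B); case: (x \in C).
apply: leq_trans (subset_leq_card sub) _.
apply: leq_trans (card_U_le _ _) _; rewrite leq_add2r.
apply: leq_trans (card_U_le _ _) _; rewrite leq_add2r.
exact: card_U_le.
Qed.

Section Main.
Variables (R : realFieldType) (T : finType) (V1 W : {set T}) (p q Psi r c : R) (a : nat).
Hypothesis hW : forall u v : T, ((u \in V1) == (v \in V1)) = ((u \in W) == (v \in W)).
Hypothesis hWc : #|~: W| = #|W|.
Variable M : R.
Hypothesis hMdef : M = #|W|%:R.
Hypothesis hp : 0 < p.
Hypothesis hr0 : 0 <= r.
Hypothesis hr1 : r <= 1.
Hypothesis hqr : q = p * r.
Hypothesis hc3 : 3 * c = M + r * M - a%:R.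
Hypothesis hcM : 2 * c <= M.
Hypothesis hup : Psi < p * (c * (M + r * M - c)).
Hypothesis ha : (2 <= a)%N.

Local Notation cost := (cut_cost V1 p q).
Ltac pullh := have Hp := hp; have Hr0 := hr0; have Hr1 := hr1; have Hc3 := hc3;
  have HcM := hcM; have Hup := hup; have HM0 := hM0.
Local Notation kk := (kcnt R W).
Local Notation ll := (lcnt R W).
Hypothesis hM0 : 0 < M.

Lemma kkc A : kk A = M - kk (~: A).
Proof. by rewrite hMdef -(kk_sum R W A); ring. Qed.
Lemma llc A : ll (~: A) = M - ll A.
Proof. by rewrite hMdef -hWc -(ll_sum R W A); ring. Qed.

Lemma cls A : cost A <= Psi -> 2 * kk (~: A) <= M ->
  kk (~: A) + ll (~: A) < c \/ kk (~: A) + ll A < c - r * M.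
Proof.
move=> hA hk.
have hs := ll_sum R W A; rewrite hWc -hMdef in hs.
have l0 := ll_ge0 R W A; have l1 := ll_ge0 R W (~: A); have k0 := kk_ge0 R W (~: A).
rewrite llc.
apply: classify => //; try lra.
have E : cost A = p * ((M - kk (~: A)) * kk (~: A) + ll A * (M - ll A) +
     r * ((M - kk (~: A)) * (M - ll A) + ll A * kk (~: A))).
  by rewrite (cost_formula _ _ hW) kkc llc hqr; ring.
rewrite E in hA.
by rewrite -(ltr_pM2l hp); apply: le_lt_trans hup.
Qed.

Lemma kn_sum A : (#|A :&: W| + #|~: A :&: W|)%N = #|W|.
Proof. by rewrite (setIC A W) (setIC (~: A) W) -setDE cardsID. Qed.

Lemma ind_maj A : cost A <= Psi -> (#|W| < 2 * #|A :&: W|)%N ->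
  kk (~: A) + ll (~: A) < c \/ kk (~: A) + ll A < c - r * M.
Proof.
move=> hA hlt; apply: cls => //.
rewrite -(ltr_nat R) natrM -hMdef in hlt.
have h := kkc A; rewrite /kcnt in h hlt *; lra.
Qed.

Lemma no_half A : cost A <= Psi -> #|W| <> (2 * #|A :&: W|)%N.
Proof.
move=> hA he; pullh.
have h2 : 2 * kk (~: A) = M.
  have := kk_sum R W A; rewrite /kcnt he natrM => E.
  rewrite hMdef he natrM /kcnt; lra.
clear he.
have rM : 0 <= r * M by apply: mulr_ge0 => //; lra.
have l0 := ll_ge0 R W A; have l1 := ll_ge0 R W (~: A).
have h2' : 2 * kk (~: A) <= M by rewrite h2.
case: (cls hA h2') => h; suff : c < c by rewrite ltxx.
all: lra.
Qed.

Lemma kcomp X : kk (~: X) = M - kk X.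
Proof. by rewrite hMdef -(kk_sum R W X); ring. Qed.
Lemma llc' X : ll (~: X) = M - ll X.
Proof. exact: llc. Qed.

Lemma ind_orient : is_orientation V1 p q Psi (induced V1 p q Psi W).
Proof.
split.
- by move=> A; rewrite inE => /andP [].
- move=> A hA; rewrite !inE (cost_compl _ _ hW) hA /=.
  have h1 := kn_sum A; have h2 := no_half hA.
  case: (ltnP #|W| (2 * #|A :&: W|)) => h3; case: (ltnP #|W| (2 * #|~: A :&: W|)) => h4 //=; lia.
Qed.

Lemma ind_triple A B C : A \in induced V1 p q Psi W -> B \in induced V1 p q Psi W ->
  C \in induced V1 p q Psi W -> (a <= #|A :&: B :&: C|)%N.
Proof.
pullh.
rewrite !inE => /andP [hA mA] /andP [hB mB] /andP [hC mC].
have kA := ind_maj hA mA; have kB := ind_maj hB mB; have kC := ind_maj hC mC.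
have cW := card_triple W A B C.
have cT := card_triple setT A B C.
have eW : forall X, #|W :\: X| = #|~: X :&: W| by move=> X; rewrite setDE setIC.
have eT : forall X, #|setT :\: X| = (#|~: X :&: W| + #|~: X :\: W|)%N
  by move=> X; rewrite setTD cardsID.
rewrite !eW in cW; rewrite !eT cardsT -(cardsC W) hWc in cT.
rewrite -(ler_nat R) !natrD -hMdef in cW.
rewrite -(ler_nat R) !natrD -hMdef in cT.
rewrite /kcnt /lcnt in kA kB kC.
rewrite -(ler_nat R).
have rM : 0 <= r * M by apply: mulr_ge0 => //; lra.
have rMM : r * M <= M by nra.
have := ler0n R #|A :\: W|; have := ler0n R #|B :\: W|; have := ler0n R #|C :\: W|.
have := ler0n R #|~: A :\: W|; have := ler0n R #|~: B :\: W|; have := ler0n R #|~: C :\: W|.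
move=> p1 p2 p3 p4 p5 p6.
case: kA => kA; case: kB => kB; case: kC => kC; lra.
Qed.

Lemma sub_cost (Z A : {set T}) : Z \subset A :&: W -> (2 * #|A :&: W| <= #|W|)%N -> cost Z <= cost A.
Proof.
pullh; move=> hZ hle.
have ZW : Z \subset W := subset_trans hZ (subsetIr A W).
have jk : (#|Z| <= #|A :&: W|)%N := subset_leq_card hZ.
rewrite !(cost_formula _ _ hW).
have e1 : kk Z = #|Z|%:R by rewrite /kcnt (setIidPl ZW).
have e2 : ll Z = 0.
  rewrite /lcnt (_ : Z :\: W = set0) ?cards0 //; apply/eqP; rewrite setD_eq0 //.
rewrite (kcomp Z) (llc' Z) (kcomp A) (llc' A) e2 e1 hqr.
have hs := ll_sum R W A; rewrite hWc -hMdef in hs.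
have l0 := ll_ge0 R W A; have l1 := ll_ge0 R W (~: A).
rewrite -(ler_nat R) in jk.
rewrite -(ler_nat R) natrM -hMdef in hle.
have j0 : 0 <= (#|Z|%:R : R) := ler0n _ _.
move: jk hle; rewrite -/(kcnt R W A) => jk hle.
set j := (#|Z|%:R : R) in j0 jk *.
set k := kk A in jk hle *.
set l := ll A in l0 hs *.
have h1 : 0 <= (k - j) * (M - k - j) by apply: mulr_ge0; lra.
have h2 : 0 <= l * (M - l) by apply: mulr_ge0; lra.
have h3 : 0 <= (k - j) * M by apply: mulr_ge0; lra.
have h4 : 0 <= l * (M - 2 * k) by apply: mulr_ge0; lra.
have h5 : 0 <= p * ((k - j) * (M - k - j) + l * (M - l)) + p * r * ((k - j) * M + l * (M - 2 * k)).
  apply: addr_ge0; apply: mulr_ge0; try apply: mulr_ge0; lra.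
rewrite -subr_ge0; apply: (le_trans h5); rewrite le_eqVlt; apply/orP; left; apply/eqP; ring.
Qed.

Lemma descent (O : {set {set T}}) (X : {set T}) : is_tangle V1 p q Psi a O -> (forall Z : {set T}, Z \subset X -> cost Z <= Psi) ->
  forall Z : {set T}, Z \subset X -> Z \in O -> False.
Proof.
move=> [[_ hor] htr] hX.
suff H : forall n (Z : {set T}), (#|Z| <= n)%N -> Z \subset X -> Z \in O -> False.
  by move=> Z; exact: H #|Z| Z (leqnn _).
have Ha := ha.
elim=> [|n IH] Z hn hZ ZO.
  have := htr Z Z Z ZO ZO ZO; rewrite !setIid => H.
  by have := leq_trans (leq_trans Ha H) hn.
have := htr Z Z Z ZO ZO ZO; rewrite !setIid => hZa.
have : (0 < #|Z|)%N by exact: leq_trans (isT : (1 <= 2)%N) (leq_trans Ha hZa).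
rewrite card_gt0 => /set0Pn [z zZ].
have YX : [set z] \subset X by rewrite sub1set; exact: (subsetP hZ).
have YO : [set z] \notin O.
  apply/negP => YO; have := htr _ _ _ YO YO YO; rewrite !setIid cards1 => H.
  by have := leq_trans Ha H.
have cYO : ~: [set z] \in O.
  by have := hor _ (hX _ YX); rewrite (negbTE YO); case: (_ \in O).
have Z'X : Z :\ z \subset X by apply: subset_trans hZ; exact: subsetDl.
have hZ' : (#|Z :\ z| <= n)%N by move: hn; rewrite (cardsD1 z Z) zZ add1n ltnS.
case Z'O : (Z :\ z \in O); first exact: IH _ hZ' Z'X Z'O.
have cZ'O : ~: (Z :\ z) \in O.
  by have := hor _ (hX _ Z'X); rewrite Z'O; case: (_ \in O).
have := htr _ _ _ ZO cZ'O cYO.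
have -> : Z :&: ~: (Z :\ z) :&: ~: [set z] = set0.
  by apply/setP => x; rewrite !inE; case: (x == z); case: (x \in Z).
rewrite cards0 => H.
by have := leq_trans Ha H.
Qed.

Lemma tangle_ind (O : {set {set T}}) : is_tangle V1 p q Psi a O -> W \in O -> O = induced V1 p q Psi W.
Proof.
move=> tO WO; have tO' := tO; case: tO => [[hin hor] htr].
have Ha := ha.
have fwd : forall A : {set T}, A \in O -> A \in induced V1 p q Psi W.
  move=> A AO; have hA := hin A AO; rewrite inE hA /=.
  rewrite ltnNge; apply/negP => hle.
  have hX : forall Z : {set T}, Z \subset A :&: W -> cost Z <= Psi.
    by move=> Z hZ; exact: le_trans (sub_cost hZ hle) hA.
  have XO : A :&: W \in O.
    case: (boolP (A :&: W \in O)) => // nXO.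
    have cXO : ~: (A :&: W) \in O.
      by have := hor _ (hX _ (subxx _)); rewrite (negbTE nXO); case: (_ \in O).
    have := htr _ _ _ AO cXO WO.
    have -> : A :&: ~: (A :&: W) :&: W = set0.
      by apply/setP => x; rewrite !inE; case: (x \in A); case: (x \in W).
    rewrite cards0 => H.
    by have := leq_trans Ha H.
  exact: (@descent O (A :&: W) tO' hX _ (subxx _) XO).
apply/setP => A; apply/idP/idP; first exact: fwd.
move=> hAi; have := hAi; rewrite inE => /andP [hA mA].
case: (boolP (A \in O)) => // nAO.
have cAO : ~: A \in O by have := hor _ hA; rewrite (negbTE nAO); case: (_ \in O).
have := fwd _ cAO; rewrite inE => /andP [_ mC].
rewrite -(kn_sum A) mul2n -addnn ltn_add2l in mA.
rewrite -(kn_sum A) mul2n -addnn ltn_add2r in mC.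
by have := ltn_trans mA mC; rewrite ltnn.
Qed.
Lemma bundle : is_orientation V1 p q Psi (induced V1 p q Psi W) /\
  (forall A B C : {set T}, A \in induced V1 p q Psi W -> B \in induced V1 p q Psi W ->
     C \in induced V1 p q Psi W -> (a <= #|A :&: B :&: C|)%N) /\
  (forall O : {set {set T}}, is_tangle V1 p q Psi a O -> W \in O -> O = induced V1 p q Psi W).
Proof. split; [exact: ind_orient | split; [exact: ind_triple | exact: tangle_ind]]. Qed.
End Main.



Theorem theorem2 (R : realFieldType) (T : finType) (V1 : {set T})
  (p q Psi : R) (a : nat) :
  ~~ odd #|T| ->
  #|V1| = #|~: V1| ->
  0 <= q -> q < p -> p <= 1 ->
  (2 <= a)%N ->
  p > 3 * q * (#|T|%:R) / (#|T|%:R - 2 * a%:R) ->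
  let n : R := #|T|%:R in
  let xi : R := 1 + q / p in
  q * (n / 2) ^+ 2 <= Psi ->
  Psi < n ^+ 2 / 4 * p *
          (3^-1 * xi * (xi - 2 * a%:R / n) - 9^-1 * (xi - 2 * a%:R / n) ^+ 2) ->
  induced V1 p q Psi V1 != induced V1 p q Psi (~: V1) /\
  (forall O : {set {set T}},
     is_tangle V1 p q Psi a O <->
     (O = induced V1 p q Psi V1 \/ O = induced V1 p q Psi (~: V1))).
Proof.
move=> _ hV1 hq hqp _ ha hpgt n xi hlow hup.
rewrite {}/xi in hup; rewrite {}/n in hlow hup hpgt.
have [M hMdef] : exists M : R, M = #|V1|%:R by eexists.
have hT : #|T|%:R = M + M :> R.
  by rewrite -(cardsC V1) -hV1 natrD hMdef.
rewrite hT in hlow hup hpgt.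
have hp : 0 < p by lra.
have [r hr] : exists r : R, r = q / p by eexists.
have hqr : q = p * r by rewrite hr mulrC divfK // gt_eqF.
have hr0 : 0 <= r by rewrite hr divr_ge0 // ltW.
have hr1 : r <= 1 by rewrite hr ler_pdivrMr // mul1r ltW.
have hM0' : 0 <= M by rewrite hMdef ler0n.
have hM0 : 0 < M.
  rewrite lt_neqAle hM0' andbT; apply/negP => /eqP M0.
  rewrite -M0 in hlow hup.
  move: hlow hup; rewrite !addr0 mul0r expr0n /= !mul0r mulr0; lra.
have [c hc] : exists c : R, c = (M + r * M - a%:R) / 3 by eexists.
have hc3 : 3 * c = M + r * M - a%:R by rewrite hc; field.
have hupE : (M + M) ^+ 2 / 4 * p *
   (3^-1 * (1 + q / p) * (1 + q / p - 2 * a%:R / (M + M)) -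
    9^-1 * (1 + q / p - 2 * a%:R / (M + M)) ^+ 2) = p * (c * (M + r * M - c)).
  rewrite -hr hc; field.
  by rewrite -mulr2n mulrn_eq0 /= gt_eqF.
rewrite hupE in hup.
have hlowE : q * ((M + M) / 2) ^+ 2 = p * r * M ^+ 2.
  by rewrite hqr; field.
rewrite hlowE in hlow.
have hMa : a%:R < M.
  case: (ltP (a%:R : R) M) => // hle; exfalso.
  have key : c * (M + r * M - c) <= r * M ^+ 2.
    rewrite expr2.
    have rM : 0 <= r * M by apply: mulr_ge0.
    have rMM : 0 <= r * M * M by apply: mulr_ge0.
    case: (leP c 0) => hc0.
      have : 0 <= (- c) * (M + r * M - c) by apply: mulr_ge0; lra.
      lra.
    have h2 : 0 <= (r * M / 3 - c) * (M + r * M) by apply: mulr_ge0; lra.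
    have h3 : 0 <= r * M * M * (2 - r) by apply: mulr_ge0; lra.
    have h4 : 0 <= c * c by apply: mulr_ge0; lra.
    nra.
  have : p * (c * (M + r * M - c)) <= p * (r * M ^+ 2) by apply: ler_wpM2l; lra.
  move=> hX.
  suff : Psi < Psi by rewrite ltxx.
  rewrite -mulrA in hlow; lra.
have hMa2 : 0 < M - a%:R - 3 * (r * M).
  have hd : 0 < M + M - 2 * a%:R by lra.
  rewrite ltr_pdivrMr // in hpgt.
  have : 0 < p * (M - a%:R - 3 * (r * M)).
    have -> : p * (M - a%:R - 3 * (r * M)) = (p * (M + M - 2 * a%:R) - 3 * q * (M + M)) / 2.
      by rewrite hqr; field.
    apply: divr_gt0; lra.
  by rewrite pmulr_rgt0.
have hcM : 2 * c <= M by have := ler0n R a; lra.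
have hW1 : forall u v : T, ((u \in V1) == (v \in V1)) = ((u \in V1) == (v \in V1)) by [].
have hWc1 : #|~: V1| = #|V1| by rewrite hV1.
have hW2 : forall u v : T, ((u \in V1) == (v \in V1)) = ((u \in ~: V1) == (v \in ~: V1)).
  by move=> u v; rewrite !inE; case: (u \in V1); case: (v \in V1).
have hWc2 : #|~: ~: V1| = #|~: V1| by rewrite setCK.
have hMdef2 : M = #|~: V1|%:R by rewrite -hV1.
have [B1o [B1t B1i]] := bundle hW1 hWc1 hMdef hp hr0 hr1 hqr hc3 hcM hup ha hM0.
have [B2o [B2t B2i]] := bundle hW2 hWc2 hMdef2 hp hr0 hr1 hqr hc3 hcM hup ha hM0.
have hcost : cut_cost V1 p q V1 <= Psi.
  rewrite (cost_formula _ _ hW1) /kcnt /lcnt setIC setICr setIid setDv setDE setIid cards0.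
  rewrite -hMdef2 -hMdef hqr.
  move: hlow; rewrite expr2; lra.
have m0 : (0 < #|V1|)%N by rewrite -(ltr0n R) -hMdef.
have V1in : V1 \in induced V1 p q Psi V1.
  by rewrite inE hcost /= setIid mul2n -addnn -{1}[#|V1|]addn0 ltn_add2l.
split.
  apply/negP => /eqP E.
  move: V1in; rewrite E inE => /andP [_].
  by rewrite setICr cards0 muln0 ltn0.
move=> O; split.
  move=> tO.
  have := tO.1.2 V1 hcost.
  case: (boolP (V1 \in O)) => V1O /=.
    by left; exact: B1i.
  rewrite negbK => cV1O.
  by right; exact: B2i.
by case=> ->; split.
Qed.
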